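(* Consider an episodic RMDP with $\mathcal{S}\times\mathcal{A}$-rectangular total-variation robust sets of radius $\rho\in[0,1)$ satisfying the vanishing minimal value assumption. Let $\pi$ be any deterministic Markov policy, and define $\widetilde T_h(\cdot|s,a)\in\arg\min_{P\in\mathcal{P}_\rho(s,a;P^\star_h)}\mathbb{E}_{P}[V^\pi_{h+1,P^\star,\boldsymbol{\Phi}}]$ for all $(s,a,h)$, $\widetilde T=\{\widetilde T_h\}_{h=1}^H$. Then $$\mathbb{E}_{(s_h,a_h)\sim(\widetilde T,\pi)}\Big[\sum_{h=1}^H\mathbb{V}_{\widetilde T_h(\cdot|s_h,a_h)}\big[V^\pi_{h+1,P^\star,\boldsymbol{\Phi}}\big]\Big]\le2H\cdot\min\{H,\rho^{-1}\},$$ where the expectation is over trajectories starting from the initial state $s_1$ and generated by $\pi$ under the kernels $\widetilde T$.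
   Context: Episodic RMDP $(\mathcal{S},\mathcal{A},H,P^\star,R,\boldsymbol{\Phi})$: finite $\mathcal{S},\mathcal{A}$, nominal kernels $P^\star_h$, rewards $R_h\in[0,1]$, fixed initial state $s_1$. TV robust set $\boldsymbol{\Phi}(P_h)=\bigotimes_{(s,a)}\mathcal{P}_\rho(s,a;P_h)$, $\mathcal{P}_\rho(s,a;P_h)=\{\widetilde P\in\Delta(\mathcal{S}):\frac12\sum_{s'}|\widetilde P(s')-P_h(s'|s,a)|\le\rho\}$. $V^\pi_{h,P^\star,\boldsymbol{\Phi}}(s)$ is the infimum over all $\widetilde P_i(\cdot|s',a')\in\mathcal{P}_\rho(s',a';P^\star_i)$ of the expected $\sum_{i=h}^HR_i(s_i,a_i)$ under $\pi$ from $s_h=s$; $V_{H+1}\equiv0$; $V^\star=\max_\pi V^\pi$. Vanishing minimal value assumption: $\min_sV^\star_{1,P^\star,\boldsymbol{\Phi}}(s)=0$ and $s_1\notin\arg\min_sV^\star_{1,P^\star,\boldsymbol{\Phi}}(s)$. $\mathbb{V}_p[f]=\mathbb{E}_p[f^2]-(\mathbb{E}_p[f])^2$. $\rho^{-1}=\infty$ if $\rho=0$. *)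

(* Defs.v *)
From HB Require Import structures.
From mathcomp Require Import all_boot all_order all_algebra.
From mathcomp Require Import classical_sets reals.
Set Implicit Arguments. Unset Strict Implicit. Unset Printing Implicit Defensive.
Import Order.TTheory GRing.Theory Num.Theory.
Local Open Scope classical_set_scope.
Local Open Scope ring_scope.

Section RMDP.
Variables (R : realType) (S A : finType).

(* Steps are indexed h = 1, ..., H (as naturals); a kernel family gives
   P h s a s' = P_h(s'|s,a). *)
Definition kernel := nat -> S -> A -> S -> R.

Definition is_dist (T : finType) (q : T -> R) :=
  (forall t, 0 <= q t) /\ \sum_t q t = 1.

Definition TVdist (p q : S -> R) : R := 2^-1 * \sum_s `|p s - q s|.

Definition robust_ball (rho : R) (p q : S -> R) :=
  is_dist q /\ TVdist q p <= rho.

Definition expect (p f : S -> R) : R := \sum_s p s * f s.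
Definition variance (p f : S -> R) : R :=
  expect p (fun s => f s ^+ 2) - (expect p f) ^+ 2.

(* Markov (possibly randomized) policies: pi h s a = pi_h(a|s). *)
Definition mpolicy := nat -> S -> A -> R.
Definition markov_policy (H : nat) (pi : mpolicy) :=
  forall h s, (1 <= h <= H)%N -> is_dist (pi h s).
Definition det_policy (d : nat -> S -> A) : mpolicy :=
  fun h s a => if a == d h s then 1 else 0.

(* Expected return sum_{i=h}^{h+k-1} R_i(s_i,a_i) under pi and kernels P, from s_h = s *)
Fixpoint eval_aux (Rw : nat -> S -> A -> R) (pi : mpolicy) (P : kernel)
  (k h : nat) (s : S) : R :=
  match k with
  | 0 => 0
  | k'.+1 => \sum_a pi h s a *
      (Rw h s a + \sum_s' P h s a s' * eval_aux Rw pi P k' h.+1 s')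
  end.

(* V^pi_{h,P}(s): expected sum_{i=h}^H R_i; equals 0 for h = H+1 *)
Definition value (H : nat) Rw pi P h s : R := eval_aux Rw pi P (H.+1 - h) h s.

Definition robust_value (H : nat) (rho : R) (Pstar : kernel) Rw (pi : mpolicy)
  (h : nat) (s : S) : R :=
  inf [set x | exists Pt : kernel,
        (forall i s' a', (h <= i <= H)%N -> robust_ball rho (Pstar i s' a') (Pt i s' a'))
        /\ x = value H Rw pi Pt h s].

Definition optimal_value (H : nat) (rho : R) (Pstar : kernel) Rw (h : nat) (s : S) : R :=
  sup [set x | exists pi : mpolicy, markov_policy H pi /\
        x = robust_value H rho Pstar Rw pi h s].

(* occ T d s1 n s = Pr(s_{n+1} = s) for the trajectory from s_1 under
   deterministic policy d and kernels T *)
Fixpoint occ (T : kernel) (d : nat -> S -> A) (s1 : S) (n : nat) : S -> R :=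
  match n with
  | 0 => fun s => if s == s1 then 1 else 0
  | n'.+1 => fun s' => \sum_s occ T d s1 n' s * T n' .+1 s (d n'.+1 s) s'
  end.

(* min{H, rho^-1} with rho^-1 = +oo when rho = 0 *)
Definition minH_invrho (H : nat) (rho : R) : R :=
  if rho == 0 then H%:R else Num.min H%:R rho^-1.

End RMDP.

(* Main.v *)
Require Import Defs.
From HB Require Import structures.
From mathcomp Require Import all_boot all_order all_algebra.
From mathcomp Require Import classical_sets reals.
From mathcomp Require Import zify ring lra.
Import Order.TTheory GRing.Theory Num.Theory.
Local Open Scope ring_scope.

Section Proof8.
Variables (R : realType) (S A : finType) (H : nat) (rho : R)
  (Pstar : kernel R S A) (Rw : nat -> S -> A -> R) (s1 : S)
  (d : nat -> S -> A) (Tt : kernel R S A).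
Hypothesis hrho0 : 0 <= rho.
Hypothesis hrho1 : rho < 1.
Hypothesis hPs : forall h s a, (1 <= h <= H)%N -> is_dist (Pstar h s a).
Hypothesis hR : forall h s a, (1 <= h <= H)%N -> 0 <= Rw h s a <= 1.

Lemma eval_bounds (pi : mpolicy R S A) (P : kernel R S A) k : forall h s,
  (1 <= h)%N -> (h + k <= H.+1)%N ->
  (forall i s, (h <= i <= H)%N -> is_dist (pi i s)) ->
  (forall i s a, (h <= i <= H)%N -> is_dist (P i s a)) ->
  0 <= eval_aux Rw pi P k h s <= k%:R.
Proof.
elim: k => [|k IH] h s h1 hk hpi hP /=; first by rewrite mulr0n lexx.
have hh : (h <= H)%N by lia.
set X := fun a => Rw h s a + \sum_s' P h s a s' * eval_aux Rw pi P k h.+1 s'.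
have HX : forall a, 0 <= X a <= k.+1%:R.
  move=> a; have /andP[r0 r1] := hR h s a (ltac:(lia) : (1 <= h <= H)%N).
  have [P0 P1] := hP h s a (ltac:(lia)).
  have IH' s' := IH h.+1 s' isT (ltac:(lia)) (fun i s0 hi => hpi i s0 (ltac:(lia)))
     (fun i s0 a0 hi => hP i s0 a0 (ltac:(lia))).
  rewrite /X; apply/andP; split.
    apply: addr_ge0 => //; apply: sumr_ge0 => s' _.
    by apply: mulr_ge0 => //; case/andP: (IH' s').
  rewrite mulrSr addrC; apply: lerD => //.
  apply: (@le_trans _ _ (\sum_s' P h s a s' * k%:R)).
    apply: ler_sum => s' _; apply: ler_wpM2l => //; by case/andP: (IH' s').
  by rewrite -mulr_suml P1 mul1r.
have [pi0 pi1] := hpi h s (ltac:(lia)).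
apply/andP; split.
  by apply: sumr_ge0 => a _; apply: mulr_ge0 => //; case/andP: (HX a).
apply: (@le_trans _ _ (\sum_a pi h s a * k.+1%:R)).
  apply: ler_sum => a _; apply: ler_wpM2l => //; by case/andP: (HX a).
by rewrite -mulr_suml pi1 mul1r.
Qed.

Notation pid := (@det_policy R S A d).
Notation V := (robust_value H rho Pstar Rw pid).

Lemma det_dist h s : is_dist (pid h s).
Proof.
split; first by move=> a; rewrite /det_policy; case: eqP.
rewrite (bigD1 (d h s)) //= /det_policy eqxx.
by rewrite [X in _ + X]big1 ?addr0 // => a /negbTE ->.
Qed.

Lemma eval_det P k h s : eval_aux Rw pid P k.+1 h s =
  Rw h s (d h s) + \sum_s' P h s (d h s) s' * eval_aux Rw pid P k h.+1 s'.
Proof.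
rewrite /= (bigD1 (d h s)) //= /det_policy eqxx mul1r.
rewrite [X in _ + X]big1 ?addr0 // => a /negbTE ->; by rewrite mul0r.
Qed.

Lemma value_rec P h s : (h <= H)%N -> value H Rw pid P h s =
  Rw h s (d h s) + \sum_s' P h s (d h s) s' * value H Rw pid P h.+1 s'.
Proof. by move=> hh; rewrite /value subSn // eval_det subSS. Qed.

Lemma value_end pi P s : value H Rw pi P H.+1 s = 0.
Proof. by rewrite /value subnn. Qed.

Definition feas h (Pt : kernel R S A) := forall i s' a', (h <= i <= H)%N ->
  robust_ball rho (Pstar i s' a') (Pt i s' a').

Lemma ball_refl i s a : (1 <= i <= H)%N -> robust_ball rho (Pstar i s a) (Pstar i s a).
Proof.
move=> hi; split; first exact: hPs.
rewrite /TVdist big1 ?mulr0 // => s' _; by rewrite subrr normr0.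
Qed.

Lemma feas_Pstar h : (1 <= h)%N -> feas h Pstar.
Proof. move=> h1 i s a hi; apply: ball_refl; lia. Qed.

Lemma value_bounds pi P h s : (1 <= h <= H.+1)%N ->
  (forall i s, (h <= i <= H)%N -> is_dist (pi i s)) -> feas h P ->
  0 <= value H Rw pi P h s <= (H.+1 - h)%:R.
Proof.
move=> hh hpi hP; apply: eval_bounds => //; [lia|lia|].
move=> i s' a' hi; exact: (hP i s' a' hi).1.
Qed.

Lemma rv_lb pi h s Pt : (1 <= h <= H.+1)%N ->
  (forall i s, (h <= i <= H)%N -> is_dist (pi i s)) -> feas h Pt ->
  robust_value H rho Pstar Rw pi h s <= value H Rw pi Pt h s.
Proof.
move=> hh hpi hP; apply: ge_inf; last by exists Pt.
exists 0 => x [P [hP' ->]].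
by case/andP: (value_bounds pi P h s hh hpi hP').
Qed.

Lemma rv_ge0 pi h s : (1 <= h <= H.+1)%N ->
  (forall i s, (h <= i <= H)%N -> is_dist (pi i s)) ->
  0 <= robust_value H rho Pstar Rw pi h s.
Proof.
move=> hh hpi; apply: lb_le_inf.
  exists (value H Rw pi Pstar h s), Pstar; split => //; apply: feas_Pstar; lia.
move=> x [P [hP' ->]].
by case/andP: (value_bounds pi P h s hh hpi hP').
Qed.

Hypothesis hT : forall h s a, (1 <= h <= H)%N ->
     robust_ball rho (Pstar h s a) (Tt h s a) /\
     forall P, robust_ball rho (Pstar h s a) P ->
       expect (Tt h s a) (V h.+1) <= expect P (V h.+1).

Lemma feas_Tt h : (1 <= h)%N -> feas h Tt.
Proof. move=> h1 i s a hi; apply: (hT i s a _).1; lia. Qed.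

Lemma V_eq_aux m : forall h s, (H.+1 - h)%N = m -> (1 <= h <= H.+1)%N ->
  V h s = value H Rw pid Tt h s.
Proof.
have hpi h : forall i s, (h <= i <= H)%N -> is_dist (pid i s) by move=> *; exact: det_dist.
elim: m => [|m IH] h s hm hh.
  have -> : h = H.+1 by lia.
  rewrite value_end; apply/eqP; rewrite eq_le; apply/andP; split.
    have := rv_lb pid H.+1 s Tt (ltac:(lia) : (1 <= H.+1 <= H.+1)%N) (hpi H.+1) (feas_Tt H.+1 isT).
    by rewrite value_end.
  apply: rv_ge0; [lia | exact: hpi].
have hH : (h <= H)%N by lia.
apply/eqP; rewrite eq_le; apply/andP; split.
  apply: rv_lb; [lia | exact: hpi | apply: feas_Tt; lia].
apply: lb_le_inf.
  exists (value H Rw pid Tt h s), Tt; split => //; apply: feas_Tt; lia.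
move=> x [P [hP ->]].
rewrite !value_rec //; apply: lerD => //.
have eqV s' : value H Rw pid Tt h.+1 s' = V h.+1 s' by rewrite IH //; lia.
under eq_bigr => s' _ do rewrite eqV.
apply: (@le_trans _ _ (\sum_s' P h s (d h s) s' * V h.+1 s')).
  exact: (hT h s (d h s) (ltac:(lia))).2 (hP h s (d h s) (ltac:(lia))).
apply: ler_sum => s' _; apply: ler_wpM2l.
  by case: (hP h s (d h s) (ltac:(lia))) => -[+ _] _; apply.
apply: rv_lb; [lia | exact: hpi | ].
move=> i s0 a0 hi; apply: hP; lia.
Qed.

Lemma V_eq h s : (1 <= h <= H.+1)%N -> V h s = value H Rw pid Tt h s.
Proof. by move=> hh; exact: (V_eq_aux (H.+1 - h)%N). Qed.

Lemma V_bell h s : (1 <= h <= H)%N ->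
  V h s = Rw h s (d h s) + \sum_s' Tt h s (d h s) s' * V h.+1 s'.
Proof.
move=> hh; rewrite V_eq ?value_rec; last 2 first.
- by case/andP: hh.
- lia.
congr (_ + _); apply: eq_bigr => s' _; rewrite V_eq //; lia.
Qed.

Lemma V_bounds h s : (1 <= h <= H.+1)%N -> 0 <= V h s <= (H.+1 - h)%:R.
Proof.
move=> hh; rewrite V_eq //; apply: value_bounds => //.
  by move=> *; exact: det_dist.
apply: feas_Tt; lia.
Qed.

Lemma V_end s : V H.+1 s = 0.
Proof. by rewrite V_eq ?value_end //; lia. Qed.

Lemma sum_ind (z : S) (f : S -> R) : \sum_s' (s' == z)%:R * f s' = f z.
Proof.
rewrite (bigD1 z) //= eqxx mul1r [X in _ + X]big1 ?addr0 // => s' /negbTE ->.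
by rewrite mul0r.
Qed.

Lemma sum_ind1 (z : S) : \sum_s' ((s' == z)%:R : R) = 1.
Proof.
rewrite (bigD1 z) //= eqxx [X in _ + X]big1 ?addr0 // => s' /negbTE ->.
by [].
Qed.

Hypothesis hs0 : exists s0, optimal_value H rho Pstar Rw 1 s0 = 0.

Lemma V1_le_opt s : V 1 s <= optimal_value H rho Pstar Rw 1 s.
Proof.
apply: ub_le_sup; last by exists pid; split => // h s' _; exact: det_dist.
exists H%:R => x [pi [hpi ->]].
apply: (le_trans (rv_lb pi 1 s Pstar _ _ _)).
- lia.
- exact: hpi.
- exact: feas_Pstar.
have /andP[_] := value_bounds pi Pstar 1 s (ltac:(lia)) hpi (feas_Pstar 1 isT).
by rewrite subn1.
Qed.

Lemma exists_pos (T : S -> R) : \sum_s' T s' = 1 -> exists s', T s' != 0.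
Proof.
move=> T1; case: (boolP [exists s', T s' != 0]) => [/existsP //|].
rewrite negb_exists => /forallP hall; exfalso; move: T1.
rewrite big1; first by move=> /eqP; rewrite eq_sym oner_eq0.
by move=> s' _; move: (hall s'); rewrite negbK => /eqP.
Qed.

Lemma le_sum1 (F : S -> R) z : (forall s, 0 <= F s) -> F z <= \sum_s F s.
Proof. by move=> F0; rewrite (bigD1 z) //= lerDl sumr_ge0. Qed.

Lemma V_zero h : (1 <= h <= H.+1)%N -> exists z, V h z = 0.
Proof.
elim: h => [//|h IH] hh.
case: (posnP h) => [->|hpos].
  case: hs0 => s0 hs0'; exists s0; apply/eqP; rewrite eq_le; apply/andP; split.
    by rewrite -hs0' V1_le_opt.
  by case/andP: (V_bounds 1 s0 (ltac:(lia) : (1 <= 1 <= H.+1)%N)).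
have [z hz] := IH (ltac:(lia)).
have hhH : (1 <= h <= H)%N by lia.
have [[T0 T1] _] := (hT h z (d h z) hhH).1.
have [s' hs'] := exists_pos _ T1.
exists s'.
have hV s : 0 <= V h.+1 s by case/andP: (V_bounds h.+1 s (ltac:(lia) : (1 <= h.+1 <= H.+1)%N)).
have hprod : Tt h z (d h z) s' * V h.+1 s' = 0.
  apply/eqP; rewrite eq_le mulr_ge0 // andbT.
  have /andP[r0 _] := hR h z (d h z) hhH.
  apply: (le_trans (le_sum1 (fun s => Tt h z (d h z) s * V h.+1 s) s' _)).
    by move=> s; apply: mulr_ge0.
  by rewrite -[X in _ <= X]hz V_bell // lerDr.
by move/eqP: hprod; rewrite mulf_eq0 (negbTE hs') => /eqP.
Qed.

Lemma ball_mix h s a z : (1 <= h <= H)%N ->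
  robust_ball rho (Pstar h s a)
    (fun s' => (1 - rho) * Pstar h s a s' + rho * (s' == z)%:R).
Proof.
move=> hh; have [P0 P1] := hPs h s a hh.
have r1 : 0 <= 1 - rho by rewrite subr_ge0 ltW.
split; first split.
- by move=> t; apply: addr_ge0; apply: mulr_ge0.
- by rewrite big_split /= -!mulr_sumr P1 sum_ind1 !mulr1 subrK.
rewrite /TVdist.
have e t : `|(1 - rho) * Pstar h s a t + rho * (t == z)%:R - Pstar h s a t|
   <= rho * ((t == z)%:R + Pstar h s a t).
  have -> : (1 - rho) * Pstar h s a t + rho * (t == z)%:R - Pstar h s a t
        = rho * ((t == z)%:R - Pstar h s a t) by ring.
  rewrite normrM ger0_norm //; apply: ler_wpM2l => //.
  apply: (le_trans (ler_normB _ _)).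
  by rewrite ger0_norm ?ler0n // ger0_norm.
apply: (@le_trans _ _ (2^-1 * \sum_t rho * ((t == z)%:R + Pstar h s a t))).
  apply: ler_wpM2l; first by rewrite invr_ge0 ler0n.
  by apply: ler_sum => t _; apply: e.
rewrite -mulr_sumr big_split /= sum_ind1 P1.
have -> : (1 + 1 : R) = 2 by [].
by rewrite mulrCA mulVf ?mulr1 // pnatr_eq0.
Qed.

Lemma V_le_inv_aux m : 0 < rho -> forall h s, (H.+1 - h)%N = m -> (1 <= h <= H.+1)%N ->
  V h s <= rho^-1.
Proof.
move=> rpos; elim: m => [|m IH] h s hm hh.
  have -> : h = H.+1 by lia.
  by rewrite V_end invr_ge0 ltW.
have hH : (1 <= h <= H)%N by lia.
rewrite V_bell //.
have [z hz] := V_zero h.+1 (ltac:(lia)).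
have /andP[_ r1] := hR h s (d h s) hH.
set Q := fun s' => (1 - rho) * Pstar h s (d h s) s' + rho * (s' == z)%:R.
have := (hT h s (d h s) hH).2 Q (ball_mix h s (d h s) z hH).
rewrite /expect => hle.
have hQ : \sum_s' Q s' * V h.+1 s' <= rho^-1 - 1.
  rewrite /Q.
  under eq_bigr => s' _ do rewrite mulrDl -mulrA -mulrA.
  rewrite big_split /= -!mulr_sumr sum_ind hz mulr0 addr0.
  have [P0 P1] := hPs h s (d h s) hH.
  apply: (@le_trans _ _ ((1 - rho) * (\sum_s' Pstar h s (d h s) s' * rho^-1))).
    apply: ler_wpM2l; first by rewrite subr_ge0 ltW.
    apply: ler_sum => s' _; apply: ler_wpM2l => //.
    apply: IH; lia.
  rewrite -mulr_suml P1 mul1r mulrBl mul1r mulfV ?gt_eqF //.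
have := le_trans hle hQ.
move=> hh2; lra.
Qed.

Lemma V_le_M h s : (1 <= h <= H)%N -> 0 <= V h s <= minH_invrho H rho.
Proof.
move=> hh.
have /andP[V0 VH] := V_bounds h s (ltac:(lia)).
have VH' : V h s <= H%:R.
  apply: (le_trans VH); rewrite ler_nat; lia.
rewrite V0 /= /minH_invrho; case: eqP => // /eqP rn0.
have rpos : 0 < rho by rewrite lt_def rn0 hrho0.
rewrite le_min VH' /=.
exact: (V_le_inv_aux (H.+1 - h)%N rpos h s erefl (ltac:(lia))).
Qed.

Notation occT := (occ Tt d s1).
Notation M := (minH_invrho H rho).

Lemma occ_dist n : (n <= H)%N -> (forall s, 0 <= occT n s) /\ \sum_s occT n s = 1.
Proof.
elim: n => [|n IH] hn.
  split; first by move=> s /=; case: eqP.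
  rewrite /= (bigD1 s1) //= eqxx [X in _ + X]big1 ?addr0 // => s /negbTE -> //.
have [O0 O1] := IH (ltac:(lia)).
have hn' : (1 <= n.+1 <= H)%N by lia.
split.
  move=> s' /=; apply: sumr_ge0 => s _; apply: mulr_ge0 => //.
  by case: (hT n.+1 s (d n.+1 s) hn').1 => -[+ _] _; apply.
rewrite /= exchange_big /=.
rewrite -O1; apply: eq_bigr => s _.
rewrite -mulr_sumr.
by case: (hT n.+1 s (d n.+1 s) hn').1 => -[_ ->] _; rewrite mulr1.
Qed.

Definition X n := \sum_s occT n s * V n.+1 s ^+ 2.

Lemma step i : (i < H)%N ->
  \sum_s occT i s * variance (Tt i.+1 s (d i.+1 s)) (V i.+2)
  <= X i.+1 - X i + 2 * M.
Proof.
move=> hi.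
have hi' : (1 <= i.+1 <= H)%N by lia.
have [O0 O1] := occ_dist i (ltac:(lia)).
have hpt s : variance (Tt i.+1 s (d i.+1 s)) (V i.+2) <=
    expect (Tt i.+1 s (d i.+1 s)) (fun s' => V i.+2 s' ^+ 2) - V i.+1 s ^+ 2 + 2 * M.
  rewrite /variance.
  have eE : expect (Tt i.+1 s (d i.+1 s)) (V i.+2) = V i.+1 s - Rw i.+1 s (d i.+1 s).
    by rewrite (V_bell i.+1 s hi') /expect addrC addKr.
  rewrite eE.
  have /andP[r0 r1] := hR i.+1 s (d i.+1 s) hi'.
  have /andP[v0 vM] := V_le_M i.+1 s hi'.
  have rv : Rw i.+1 s (d i.+1 s) * V i.+1 s <= V i.+1 s.
    by rewrite ler_piMl.
  nra.
apply: (@le_trans _ _ (\sum_s occT i s *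
   (expect (Tt i.+1 s (d i.+1 s)) (fun s' => V i.+2 s' ^+ 2) - V i.+1 s ^+ 2 + 2 * M))).
  by apply: ler_sum => s _; apply: ler_wpM2l.
have eX : \sum_s occT i s * expect (Tt i.+1 s (d i.+1 s)) (fun s' => V i.+2 s' ^+ 2)
   = X i.+1.
  rewrite /X /expect /=.
  under eq_bigr => s _ do rewrite mulr_sumr.
  rewrite exchange_big /=; apply: eq_bigr => s' _.
  by rewrite mulr_suml; apply: eq_bigr => s _; rewrite mulrA.
under eq_bigr => s _ do rewrite mulrDr mulrBr.
rewrite big_split /= sumrB eX -mulr_suml O1 mul1r /X.
by [].
Qed.

Lemma partial n : (n <= H)%N ->
  \sum_(i < n) \sum_s occT i s * variance (Tt i.+1 s (d i.+1 s)) (V i.+2)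
  <= X n - X 0 + 2 * M * n%:R.
Proof.
elim: n => [|n IH] hn.
  by rewrite big_ord0 subrr mulr0 addr0.
rewrite big_ord_recr /=.
have := IH (ltac:(lia)); have := step n (ltac:(lia)).
rewrite -natr1 => h1 h2; lra.
Qed.

End Proof8.

Theorem lemma8 (R : realType) (S A : finType) (H : nat) (rho : R)
  (Pstar : kernel R S A) (Rw : nat -> S -> A -> R) (s1 : S)
  (d : nat -> S -> A) (Tt : kernel R S A) :
  0 <= rho -> rho < 1 ->
  (forall h s a, (1 <= h <= H)%N -> is_dist (Pstar h s a)) ->
  (forall h s a, (1 <= h <= H)%N -> 0 <= Rw h s a <= 1) ->
  (* vanishing minimal value assumption *)
  (exists s0, optimal_value H rho Pstar Rw 1 s0 = 0) ->
  (forall s, 0 <= optimal_value H rho Pstar Rw 1 s) ->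
  ~ (forall s, optimal_value H rho Pstar Rw 1 s1 <= optimal_value H rho Pstar Rw 1 s) ->
  (* Tt_h(.|s,a) in argmin_{P in P_rho(s,a;P*_h)} E_P[V^pi_{h+1}] *)
  (forall h s a, (1 <= h <= H)%N ->
     robust_ball rho (Pstar h s a) (Tt h s a) /\
     forall P, robust_ball rho (Pstar h s a) P ->
       expect (Tt h s a) (robust_value H rho Pstar Rw (@det_policy R S A d) h.+1)
       <= expect P (robust_value H rho Pstar Rw (@det_policy R S A d) h.+1)) ->
  \sum_(i < H) \sum_s occ Tt d s1 i s *
      variance (Tt i.+1 s (d i.+1 s)) (robust_value H rho Pstar Rw (@det_policy R S A d) i.+2)
  <= 2 * H%:R * minH_invrho H rho.
Proof.
move=> r0 r1 hPs hR hs0 _ _ hT.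
have := @partial R S A H rho Pstar Rw s1 d Tt r0 r1 hPs hR hT hs0 H (leqnn H).
have XH : X R S A H rho Pstar Rw s1 d Tt H = 0.
  rewrite /X big1 // => s _.
  by rewrite (@V_end R S A H rho Pstar Rw d Tt r0 r1 hPs hR hT s) expr0n mulr0.
have X0 : 0 <= X R S A H rho Pstar Rw s1 d Tt 0.
  rewrite /X; apply: sumr_ge0 => s _; apply: mulr_ge0; last exact: sqr_ge0.
  by rewrite /=; case: eqP.
rewrite XH => h; apply: (le_trans h).
rewrite sub0r mulrAC; lra.
Qed.
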